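(* Let $g_n\in\mathscr{A}_3(\Pi)$ ($n\ge1$) and $g\in\mathscr{A}_3(\Pi)$, with $(g_n)$ uniformly bounded. If $L(g_n/g)\to0$ and $V(g_n/g)\to0$, then $L(g_n)\to L(g)$ and $V(g_n)\to V(g)$.
   Context: $E$ is a locally compact complete separable metric space with $\sigma$-finite Borel measure $\mu$; $\Pi$ is a locally trace class orthogonal projection on $L^2(E,\mu)$ with kernel $\Pi(x,y)$. For Borel $f$, $L(f)=\int_E|f(x)-1|^3\Pi(x,x)d\mu(x)$ and $V(f)=\iint_{E^2}|f(x)-f(y)|^2|\Pi(x,y)|^2d\mu(x)d\mu(y)$. $\mathscr{A}_3(\Pi)$ is the set of positive Borel $g$ with $0<\inf g\le\sup g<\infty$, $L(g)<\infty$, $V(g)<\infty$, and for which some exhausting sequence of bounded sets $(E_n)$ satisfies $\lim_n\iint\chi_{E_n^c}(x)\chi_{E_n}(y)|g(x)-1|^2|\Pi(x,y)|^2d\mu(x)d\mu(y)=0$. *)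

(* Defs.v *)
From HB Require Import structures.
From mathcomp Require Import all_boot all_algebra.
From mathcomp Require Import all_classical all_reals all_analysis.
From mathcomp.real_closed Require Import complex.

Set Implicit Arguments.
Unset Strict Implicit.
Unset Printing Implicit Defensive.

Import GRing.Theory Num.Theory.
Local Open Scope classical_set_scope.
Local Open Scope ring_scope.

Notation Borel E := (g_sigma_algebraType (@open E)).

Section Defs.
Variable R : realType.

Definition bounded_set (E : completePseudoMetricType R) (A : set E) : Prop :=
  exists (x0 : E) (r : R), A `<=` ball x0 r.

(* E is a locally compact, complete, separable metric space
   (completeness is carried by the structure completePseudoMetricType). *)
Definition lcs_metric_space (E : completePseudoMetricType R) : Prop :=
  [/\ hausdorff_space E,
      locally_compact [set: E] &
      (exists D : set E, countable D /\ dense D)].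

Definition exhausting_bounded (E : completePseudoMetricType R) (En : nat -> set E) : Prop :=
  [/\ (forall n, @measurable _ (Borel E) (En n)),
      (forall n, bounded_set (En n)),
      (forall n, En n `<=` En n.+1) &
      \bigcup_n En n = [set: E]].

Definition sqnorm (z : R[i]) : R := complex.Re z ^+ 2 + complex.Im z ^+ 2.

Definition cintegral (E : completePseudoMetricType R)
    (mu : {measure set (Borel E) -> \bar R}) (f : E -> R[i]) : R[i] :=
  (Rintegral mu [set: Borel E] (fun z => complex.Re (f z)) +i*
   Rintegral mu [set: Borel E] (fun z => complex.Im (f z)))%C.

(* Pi : E -> E -> C is the (Hermitian, reproducing) kernel of a locally trace
   class orthogonal projection on L^2(E, mu):
   - Pi is jointly Borel measurable;
   - each row Pi(x, .) is in L^2(mu);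
   - Pi(y, x) = conj Pi(x, y)      (self-adjointness);
   - \int Pi(x,z) Pi(z,y) dmu(z) = Pi(x,y)   (idempotence, Pi^2 = Pi);
   - for every bounded Borel set B, \int_B Pi(x,x) dmu(x) < oo
     (local trace class; note that Pi(x,x) = \int |Pi(x,y)|^2 dmu(y) >= 0). *)
Definition loc_trace_proj_kernel (E : completePseudoMetricType R)
    (mu : {measure set (Borel E) -> \bar R}) (Pi : E -> E -> R[i]) : Prop :=
  [/\ (measurable_fun [set: Borel E * Borel E]
        (fun p : Borel E * Borel E => complex.Re (Pi p.1 p.2)) /\
       measurable_fun [set: Borel E * Borel E]
        (fun p : Borel E * Borel E => complex.Im (Pi p.1 p.2))),
      (forall x : E, (\int[mu]_y (sqnorm (Pi x y))%:E < +oo)%E),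
      (forall x y : E, Pi y x = ((Pi x y)^*)%C),
      (forall x y : E, cintegral mu (fun z => Pi x z * Pi z y) = Pi x y) &
      (forall B : set E, @measurable _ (Borel E) B -> bounded_set B ->
         (\int[mu]_(x in B) (complex.Re (Pi x x))%:E < +oo)%E)].

(* L(f) = \int |f(x) - 1|^3 Pi(x,x) dmu(x)   (Pi(x,x) is real) *)
Definition Lfunc (E : completePseudoMetricType R)
    (mu : {measure set (Borel E) -> \bar R}) (Pi : E -> E -> R[i]) (f : E -> R)
    : \bar R :=
  (\int[mu]_x (`|f x - 1| ^+ 3 * complex.Re (Pi x x))%:E)%E.

Definition Vfunc (E : completePseudoMetricType R)
    (mu : {measure set (Borel E) -> \bar R}) (Pi : E -> E -> R[i]) (f : E -> R)
    : \bar R :=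
  (\int[mu]_x \int[mu]_y ((f x - f y) ^+ 2 * sqnorm (Pi x y))%:E)%E.

Definition A3class (E : completePseudoMetricType R)
    (mu : {measure set (Borel E) -> \bar R}) (Pi : E -> E -> R[i]) (g : E -> R)
    : Prop :=
  [/\ measurable_fun [set: Borel E] g,
      (exists c : R, 0 < c /\ forall x, c <= g x) /\
      (exists C : R, forall x, g x <= C),
      (Lfunc mu Pi g < +oo)%E,
      (Vfunc mu Pi g < +oo)%E &
      (exists En : nat -> set E, exhausting_bounded En /\
        ((fun n => (\int[mu]_x \int[mu]_y
            ((\1_(~` En n) x * \1_(En n) y * (g x - 1) ^+ 2 * sqnorm (Pi x y))%:E))%E)
         @ \oo --> 0%E))].

End Defs.

(* Main.v *)
Require Import Defs.
From HB Require Import structures.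
From mathcomp Require Import all_boot all_algebra.
From mathcomp Require Import all_classical all_reals all_analysis.
From mathcomp.real_closed Require Import complex.
From mathcomp Require Import all_order measurable_realfun ring lra.
Import Order.TTheory GRing.Theory Num.Theory.
Local Open Scope classical_set_scope.
Local Open Scope ring_scope.
Section Arith.
Variable R : realType.
Implicit Types a b e s t : R.

Lemma sq_split a b e : 0 < e -> (a + b) ^+ 2 <= (1 + e) * a ^+ 2 + (1 + e^-1) * b ^+ 2.
Proof.
move=> e0; have ue : e^-1 * e = 1 by rewrite mulVf // gt_eqF.
have u0 : 0 < e^-1 by rewrite invr_gt0.
have h : 0 <= e^-1 * (e * a - b) ^+ 2 by rewrite mulr_ge0 // ?sqr_ge0 // ltW.
have E1 : e^-1 * (e * a - b) ^+ 2 = e * a ^+ 2 - 2 * a * b + e^-1 * b ^+ 2.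
  by field; rewrite lt0r_neq0.
rewrite E1 in h.
have -> : (a + b) ^+ 2 = a ^+ 2 + 2 * a * b + b ^+ 2 by ring.
lra.
Qed.

Lemma cube_split s t e : 0 <= s -> 0 <= t -> 0 < e -> e <= 1 ->
  (s + t) ^+ 3 <= (1 + e) * s ^+ 3 + (14 / e) ^+ 3 * t ^+ 3.
Proof.
move=> s0 t0 e0 e1; set h := e / 7.
have h0 : 0 < h by rewrite /h divr_gt0.
have h1 : h <= 1 by rewrite /h ler_pdivrMr //; lra.
have -> : 14 / e = 2 / h by rewrite /h; field; rewrite gt_eqF.
have he : 1 + e = 1 + 7 * h by rewrite /h; field.
have [th|ht] := leP t (h * s).
- have st : s + t <= (1 + h) * s by nra.
  have c1 : (s + t) ^+ 3 <= ((1 + h) * s) ^+ 3 by rewrite lerXn2r // ?nnegrE; nra.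
  have c2 : (1 + h) ^+ 3 <= 1 + 7 * h.
    have hh : h * h <= h by nra.
    have hhh : h * (h * h) <= h by nra.
    rewrite !exprS expr0; nra.
  have s3 : 0 <= s ^+ 3 by rewrite exprn_ge0.
  have t3 : 0 <= (2 / h) ^+ 3 * t ^+ 3 by rewrite mulr_ge0 // exprn_ge0 // ?divr_ge0 // ltW.
  rewrite exprMn in c1; rewrite he; nra.
- have st : s + t <= (2 / h) * t.
    have : s <= t / h by rewrite ler_pdivlMr // mulrC ltW.
    have : t <= t / h by rewrite ler_pdivlMr // ler_piMr.
    rewrite mulrC -mulrA mulrC; set th := t / h; rewrite /th; lra.
  have c1 : (s + t) ^+ 3 <= ((2 / h) * t) ^+ 3 by rewrite lerXn2r // ?nnegrE; nra.
  have s3 : 0 <= (1 + e) * s ^+ 3 by rewrite mulr_ge0 // ?exprn_ge0 //; lra.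
  rewrite exprMn in c1; lra.
Qed.

Lemma tail_split (q D Cd h : R) : 0 < h -> `|D| <= Cd ->
  q ^+ 2 * D ^+ 2 <= h ^+ 2 * D ^+ 2 + (Cd ^+ 2 / h) * `|q| ^+ 3.
Proof.
move=> h0 DC; have D2 : D ^+ 2 <= Cd ^+ 2.
  by rewrite -(real_normK (num_real D)) lerXn2r // ?nnegrE // (le_trans _ DC).
have D0 : 0 <= D ^+ 2 by rewrite sqr_ge0.
have q3 : 0 <= `|q| ^+ 3 by rewrite exprn_ge0.
have [qh|hq] := leP `|q| h.
- have : q ^+ 2 <= h ^+ 2 by rewrite -(real_normK (num_real q)) lerXn2r // ?nnegrE // ltW.
  have : 0 <= Cd ^+ 2 / h * `|q| ^+ 3 by rewrite mulr_ge0 // divr_ge0 // ?sqr_ge0 // ltW.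
  nra.
- have qq : q ^+ 2 <= `|q| ^+ 3 / h.
    rewrite ler_pdivlMr // -(real_normK (num_real q)).
    have a0 : 0 <= `|q| by [].
    have a2 : 0 <= `|q| * `|q| by nra.
    rewrite !exprS expr0; nra.
  have : 0 <= h ^+ 2 * D ^+ 2 by rewrite mulr_ge0 ?sqr_ge0.
  have -> : Cd ^+ 2 / h * `|q| ^+ 3 = Cd ^+ 2 * (`|q| ^+ 3 / h) by rewrite mulrAC -mulrA.
  have q0 : 0 <= q ^+ 2 by rewrite sqr_ge0.
  nra.
Qed.
End Arith.
Section Abs.
Variable R : realType.

Lemma abstract_cvg (X e : nat -> \bar R) (y : R) :
  0 <= y -> (forall n, 0 <= X n)%E -> (forall n, 0 <= e n)%E -> e @ \oo --> 0%E ->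
  (forall ep : R, 0 < ep -> ep <= 1 -> exists M : R, 0 <= M /\ forall n,
     (X n <= ((1 + ep) * y)%:E + M%:E * e n)%E /\
     (y%:E <= (1 + ep)%:E * X n + (ep * y)%:E + M%:E * e n)%E) ->
  X @ \oo --> y%:E.
Proof.
move=> y0 X0 e0 ce H.
have [efin fe] := (fine_cvgP e 0%R).1 ce.
have [M1 [M10 HM1]] := H 1 ltr01 (lexx 1).
have Xfin : \forall n \near \oo, X n \is a fin_num.
  near=> n.
  have ef : e n \is a fin_num by near: n; exact: efin.
  rewrite ge0_fin_numE //; apply: (le_lt_trans (HM1 n).1).
  by rewrite -(fineK ef) -EFinM -EFinD ltry.
apply/fine_cvgP; split => //.
apply/cvgrPdist_le => eps eps0.
pose ep := Num.min 1 (eps / (8 * (y + 1))).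
have ep0 : 0 < ep by rewrite lt_min ltr01 /= divr_gt0 //; lra.
have ep1 : ep <= 1 by rewrite ge_min lexx.
have epy : ep * (8 * (y + 1)) <= eps.
  by rewrite -ler_pdivlMr ?ge_min ?lexx ?orbT //; lra.
have [M [M0 HM]] := H ep ep0 ep1.
have fe' := (cvgrPdist_le _ _).1 fe.
have fen : \forall t \near \oo, `|0 - (fine \o e) t| <= eps / (4 * (M + 1)).
  by apply: fe'; rewrite divr_gt0 //; lra.
near=> n.
have ef : e n \is a fin_num by near: n; exact: efin.
have xf : X n \is a fin_num by near: n; exact: Xfin.
have en : `|0 - fine (e n)| <= eps / (4 * (M + 1)) by near: n; exact: fen.
have [h1 h2] := HM n.
rewrite -(fineK ef) -(fineK xf) /= in h1 h2.
rewrite -!EFinM -!EFinD !lee_fin in h1 h2.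
have e'0 : 0 <= fine (e n) by exact: fine_ge0.
simpl.
set x := fine (X n) in h1 h2 *; set e' := fine (e n) in h1 h2 en e'0 *.
rewrite sub0r normrN ger0_norm // in en.
have Me : M * e' <= eps / 4.
  have : (M + 1) * e' <= eps / 4.
    have M1p : 0 <= M + 1 by lra.
    have := ler_wpM2l M1p en.
    have -> : (M + 1) * (eps / (4 * (M + 1))) = eps / 4.
      by field; rewrite lt0r_neq0 //; lra.
    by [].
  nra.
have x0 : 0 <= x by rewrite fine_ge0.
have epx : ep * x <= ep * ((1 + ep) * y + M * e') by rewrite ler_wpM2l // ltW.
have epe : ep * (M * e') <= M * e' by rewrite ler_piMl // mulr_ge0.
have epep : ep * (ep * y) <= ep * y by rewrite ler_piMl // mulr_ge0 // ltW.
rewrite ler_norml; apply/andP; split; nra.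
Unshelve. all: by end_near.
Qed.
End Abs.

Set Implicit Arguments.
Unset Strict Implicit.

Section Main.
Context (R : realType) (E : completePseudoMetricType R)
  (mu : {measure set (Borel E) -> \bar R}) (Pi : E -> E -> R[i]).
Hypothesis smu : sigma_finite [set: Borel E] mu.
Hypothesis hPi : loc_trace_proj_kernel mu Pi.

Definition mu' : set (Borel E) -> \bar R := mu.
HB.instance Definition _ := Measure.on mu'.
HB.instance Definition _ := @Measure_isSigmaFinite.Build _ _ _ mu' smu.

Definition mP (F : E -> E -> R) :=
  measurable_fun [set: Borel E * Borel E] (fun p : Borel E * Borel E => F p.1 p.2).
Definition mE (f : E -> R) := measurable_fun [set: Borel E] (f : Borel E -> R).

Lemma mP_fst f : mE f -> mP (fun x y => f x).
Proof. by move=> mf; exact: measurableT_comp mf measurable_fst. Qed.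
Lemma mP_snd f : mE f -> mP (fun x y => f y).
Proof. by move=> mf; exact: measurableT_comp mf measurable_snd. Qed.
Lemma mP_add F G : mP F -> mP G -> mP (fun x y => F x y + G x y).
Proof. by move=> mF mG; exact: measurable_funD. Qed.
Lemma mP_sub F G : mP F -> mP G -> mP (fun x y => F x y - G x y).
Proof. by move=> mF mG; exact: measurable_funB. Qed.
Lemma mP_mul F G : mP F -> mP G -> mP (fun x y => F x y * G x y).
Proof. by move=> mF mG; exact: measurable_funM. Qed.
Lemma mP_exp F n : mP F -> mP (fun x y => F x y ^+ n).
Proof. by move=> mF; exact: measurable_funX. Qed.
Lemma mP_norm F : mP F -> mP (fun x y => `|F x y|).
Proof. by move=> mF; apply: measurableT_comp mF; exact: normr_measurable. Qed.
Lemma mP_cst c : mP (fun _ _ => c).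
Proof. exact: measurable_cst. Qed.
Lemma mE_add f g : mE f -> mE g -> mE (fun x => f x + g x).
Proof. by move=> mf mg; exact: measurable_funD. Qed.
Lemma mE_sub f g : mE f -> mE g -> mE (fun x => f x - g x).
Proof. by move=> mf mg; exact: measurable_funB. Qed.
Lemma mE_mul f g : mE f -> mE g -> mE (fun x => f x * g x).
Proof. by move=> mf mg; exact: measurable_funM. Qed.
Lemma mE_exp f n : mE f -> mE (fun x => f x ^+ n).
Proof. by move=> mf; exact: measurable_funX. Qed.
Lemma mE_norm f : mE f -> mE (fun x => `|f x|).
Proof. by move=> mf; apply: measurableT_comp mf; exact: normr_measurable. Qed.
Lemma mE_cst c : mE (fun _ => c).
Proof. exact: measurable_cst. Qed.
Lemma mP_sec F x : mP F -> mE (F x).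
Proof. by move=> mF; have H := measurable_fun_pair2 (x : Borel E) mF; exact: H. Qed.

Definition w x y := sqnorm (Pi x y).
Definition K x := complex.Re (Pi x x).

Lemma w_ge0 x y : 0 <= w x y.
Proof. by rewrite /w /sqnorm addr_ge0 // sqr_ge0. Qed.

Lemma mP_w : mP w.
Proof.
case: hPi => -[mre mim] _ _ _ _.
by apply: mP_add; apply: mP_exp.
Qed.

Lemma mE_K : mE K.
Proof.
case: hPi => -[mre mim] _ _ _ _.
have := measurableT_comp mre (measurable_fun_pair (@measurable_id _ (Borel E) setT) (@measurable_id _ (Borel E) setT)).
by [].
Qed.

Lemma re_mul_conj (p : R[i]) : complex.Re (p * p^*)%C = sqnorm p.
Proof. by case: p => a b; rewrite /sqnorm /=; ring. Qed.

Lemma int_w x : (\int[mu]_y (w x y)%:E)%E = (K x)%:E.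
Proof.
case: hPi => _ hfin hsym hid _.
rewrite /K; have := congr1 (@complex.Re _) (hid x x).
rewrite /cintegral /= => <-.
have -> : (fun z => complex.Re (Pi x z * Pi z x)) = w x.
  by apply/funext => z; rewrite (hsym x z) re_mul_conj.
rewrite /Rintegral fineK // ge0_fin_numE ?hfin //.
by apply: integral_ge0 => y _; rewrite lee_fin w_ge0.
Qed.

Lemma K_ge0 x : 0 <= K x.
Proof.
rewrite -lee_fin -int_w; apply: integral_ge0 => y _; by rewrite lee_fin w_ge0.
Qed.

Lemma inner_meas (F : E -> E -> R) : mP F -> (forall x y, 0 <= F x y) ->
  measurable_fun [set: Borel E] (fun x : Borel E => \int[mu]_y (F x y)%:E)%E.
Proof.
move=> mF F0.
have mF' : measurable_fun [set: Borel E * Borel E]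
   (fun p : Borel E * Borel E => (F p.1 p.2)%:E).
  exact/measurable_EFinP.
have H := (measurable_fun_fubini_tonelli_F (m2:=mu') _ mF' (fun z => F0 z.1 z.2)).
exact: H.
Qed.
End Main.

Section Main2.
Context (R : realType) (E : completePseudoMetricType R)
  (mu : {measure set (Borel E) -> \bar R}) (Pi : E -> E -> R[i]).
Hypothesis smu : sigma_finite [set: Borel E] mu.
Hypothesis hPi : loc_trace_proj_kernel mu Pi.

Lemma comb2 (f1 f2 : Borel E -> \bar R) (a b : R) : 0 <= a -> 0 <= b ->
  measurable_fun setT f1 -> measurable_fun setT f2 ->
  (forall x, 0 <= f1 x)%E -> (forall x, 0 <= f2 x)%E ->
  (\int[mu]_x (a%:E * f1 x + b%:E * f2 x) =
   a%:E * \int[mu]_x f1 x + b%:E * \int[mu]_x f2 x)%E.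
Proof.
move=> a0 b0 m1 m2 p1 p2.
rewrite ge0_integralD //; last first.
- exact: measurable_funeM.
- by move=> x _; rewrite mule_ge0 ?lee_fin.
- exact: measurable_funeM.
- by move=> x _; rewrite mule_ge0 ?lee_fin.
by rewrite !ge0_integralZl // ?lee_fin.
Qed.

Definition II (F : E -> E -> R) := (\int[mu]_x \int[mu]_y (F x y)%:E)%E.

Lemma inner_comb2 (F G : E -> E -> R) (a b : R) x : 0 <= a -> 0 <= b ->
  mP F -> mP G -> (forall x y, 0 <= F x y) -> (forall x y, 0 <= G x y) ->
  (\int[mu]_y (a * F x y + b * G x y)%:E =
   a%:E * \int[mu]_y (F x y)%:E + b%:E * \int[mu]_y (G x y)%:E)%E.
Proof.
move=> a0 b0 mF mG F0 G0.
rewrite -comb2 //.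
- by apply/measurable_EFinP; exact: (mP_sec x mF).
- by apply/measurable_EFinP; exact: (mP_sec x mG).
- by move=> y; rewrite lee_fin.
- by move=> y; rewrite lee_fin.
Qed.

Lemma II_comb2 (F G : E -> E -> R) (a b : R) : 0 <= a -> 0 <= b ->
  mP F -> mP G -> (forall x y, 0 <= F x y) -> (forall x y, 0 <= G x y) ->
  II (fun x y => a * F x y + b * G x y) = (a%:E * II F + b%:E * II G)%E.
Proof.
move=> a0 b0 mF mG F0 G0; rewrite /II.
have m1 := inner_meas smu mF F0.
have m2 := inner_meas smu mG G0.
have p1 : forall x, (0 <= \int[mu]_y (F x y)%:E)%E.
  by move=> x; apply: integral_ge0 => y _; rewrite lee_fin.
have p2 : forall x, (0 <= \int[mu]_y (G x y)%:E)%E.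
  by move=> x; apply: integral_ge0 => y _; rewrite lee_fin.
have := comb2 a0 b0 m1 m2 p1 p2.
move=> <-; apply: eq_integral => x _.
exact: inner_comb2.
Qed.

Lemma II_le (F G : E -> E -> R) : mP F -> mP G ->
  (forall x y, 0 <= F x y) -> (forall x y, F x y <= G x y) -> (II F <= II G)%E.
Proof.
move=> mF mG F0 FG; rewrite /II.
apply: ge0_le_integral => //.
- by move=> x _; apply: integral_ge0 => y _; rewrite lee_fin.
- by have H := inner_meas smu mF F0; exact: H.
- have G0 : forall x y, 0 <= G x y by move=> x y; exact: le_trans (F0 x y) (FG x y).
  by have H := inner_meas smu mG G0; exact: H.
- move=> x _; apply: ge0_le_integral => //.
  + by move=> y _; rewrite lee_fin.
  + by apply/measurable_EFinP; exact: (mP_sec x mF).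
  + by apply/measurable_EFinP; exact: (mP_sec x mG).
  + by move=> y _; rewrite lee_fin.
Qed.

End Main2.

Section Main3.
Context (R : realType) (E : completePseudoMetricType R)
  (mu : {measure set (Borel E) -> \bar R}) (Pi : E -> E -> R[i]).
Hypothesis smu : sigma_finite [set: Borel E] mu.
Hypothesis hPi : loc_trace_proj_kernel mu Pi.

Lemma mL f : mE f -> measurable_fun [set: Borel E]
  (fun x : Borel E => (`|f x - 1| ^+ 3 * K Pi x)%:E).
Proof.
move=> mf; apply/measurable_EFinP.
apply: (mE_mul (f := fun x => `|f x - 1| ^+ 3)); last exact: (mE_K hPi).
by apply: mE_exp; apply: mE_norm; apply: mE_sub => //; exact: mE_cst.
Qed.

Lemma L_bound (f1 f2 h : E -> R) (Ch ep : R) : mE f1 -> mE f2 -> mE h ->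
  0 <= Ch -> 0 < ep -> ep <= 1 ->
  (forall x, `|f1 x - f2 x| <= Ch * `|h x - 1|) ->
  (Lfunc mu Pi f1 <= (1 + ep)%:E * Lfunc mu Pi f2 +
     ((14 / ep) ^+ 3 * Ch ^+ 3)%:E * Lfunc mu Pi h)%E.
Proof.
move=> m1 m2 mh Ch0 ep0 ep1 H.
have M0 : 0 <= (14 / ep) ^+ 3 * Ch ^+ 3.
  by rewrite mulr_ge0 // exprn_ge0 // divr_ge0 // ltW.
have p f x : (0 <= (`|f x - 1| ^+ 3 * K Pi x)%:E)%E.
  by rewrite lee_fin mulr_ge0 ?exprn_ge0 // (K_ge0 hPi).
have ep' : 0 <= 1 + ep by lra.
rewrite /Lfunc -(comb2 mu ep' M0 (mL m2) (mL mh) (p f2) (p h)).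
apply: (ge0_le_integral mu measurableT (fun x _ => p f1 x) (mL m1)).
  apply: emeasurable_funD; apply: measurable_funeM; [exact: (mL m2)|exact: (mL mh)].
move=> x _; rewrite -!EFinM -EFinD lee_fin.
have K0 := K_ge0 hPi x; rewrite -/(K Pi x).
set s := `|f2 x - 1|; set t := `|f1 x - f2 x|.
have st : `|f1 x - 1| <= s + t.
  by rewrite (_ : f1 x - 1 = (f2 x - 1) + (f1 x - f2 x)); [exact: ler_normD|ring].
have c2 := @cube_split R s t ep (normr_ge0 _) (normr_ge0 _) ep0 ep1.
have st0 : 0 <= s + t by exact: addr_ge0 (normr_ge0 _) (normr_ge0 _).
have c1 : `|f1 x - 1| ^+ 3 <= (s + t) ^+ 3 by rewrite lerXn2r // ?nnegrE.

have c3 : t ^+ 3 <= Ch ^+ 3 * `|h x - 1| ^+ 3.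
  have Hx := H x; rewrite -exprMn lerXn2r // ?nnegrE; [exact: normr_ge0 | exact: mulr_ge0].
have c4 : `|f1 x - 1| ^+ 3 <= (1 + ep) * s ^+ 3 + (14 / ep) ^+ 3 * Ch ^+ 3 * `|h x - 1| ^+ 3.
  apply: (le_trans c1); apply: (le_trans c2); rewrite lerD2l -mulrA ler_wpM2l //.
  by rewrite exprn_ge0 // divr_ge0 // ltW.
have := ler_wpM2r K0 c4.
by rewrite mulrDl -!mulrA.
Qed.


Lemma II_add (F G : E -> E -> R) : mP F -> mP G ->
  (forall x y, 0 <= F x y) -> (forall x y, 0 <= G x y) ->
  II mu (fun x y => F x y + G x y) = (II mu F + II mu G)%E.
Proof.
move=> mF mG F0 G0.
have := II_comb2 smu ler01 ler01 mF mG F0 G0.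
rewrite !mul1e => <-; congr II; apply/funext => x; apply/funext => y.
by rewrite !mul1r.
Qed.

Lemma II_scale (F : E -> E -> R) (a : R) : 0 <= a -> mP F ->
  (forall x y, 0 <= F x y) ->
  II mu (fun x y => a * F x y) = (a%:E * II mu F)%E.
Proof.
move=> a0 mF F0.
have := II_comb2 smu a0 (lexx 0) mF mF F0 F0.
rewrite mul0e adde0 => <-; congr II; apply/funext => x; apply/funext => y.
by rewrite mul0r addr0.
Qed.

Lemma LII (h : E -> R) : mE h ->
  II mu (fun x y => `|h x - 1| ^+ 3 * w Pi x y) = Lfunc mu Pi h.
Proof.
move=> mh; rewrite /II /Lfunc; apply: eq_integral => x _.
have mw : measurable_fun [set: Borel E] (fun y : Borel E => (w Pi x y)%:E).
  by apply/measurable_EFinP; exact: (mP_sec x (mP_w hPi)).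
have w0 : forall y : Borel E, [set: Borel E] y -> (0 <= (w Pi x y)%:E)%E.
  by move=> y _; rewrite lee_fin w_ge0.
rewrite EFinM -(int_w hPi x) -(ge0_integralZl mu measurableT mw w0) ?lee_fin //.
Qed.

Lemma mPf2 f : mE f -> mP (fun x y => (f x - f y) ^+ 2 * w Pi x y).
Proof.
move=> mf; apply: (mP_mul (F := fun x y => (f x - f y) ^+ 2)); last exact: (mP_w hPi).
by apply: mP_exp; apply: mP_sub; [exact: mP_fst|exact: mP_snd].
Qed.

Lemma mPq h : mE h -> mP (fun x y => `|h x - 1| ^+ 3 * w Pi x y).
Proof.
move=> mh; apply: (mP_mul (F := fun x y => `|h x - 1| ^+ 3)); last exact: (mP_w hPi).
apply: mP_exp; apply: (mP_norm (F := fun x y => h x - 1)).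
by apply: (mP_sub (F := fun x y => h x)); [exact: mP_fst|exact: mP_cst].
Qed.

Lemma V_bound (f1 f2 g h : E -> R) (Cg ep eta : R) :
  mE f1 -> mE f2 -> mE g -> mE h -> 0 < ep -> 0 < eta ->
  (forall x, 0 <= g x <= Cg) ->
  (forall x y, ((f1 x - f1 y) - (f2 x - f2 y)) ^+ 2 =
               (g y * (h x - h y) + (h x - 1) * (g x - g y)) ^+ 2) ->
  (Vfunc mu Pi f1 <= (1 + ep)%:E * Vfunc mu Pi f2 +
     (2 * (1 + ep^-1) * eta ^+ 2)%:E * Vfunc mu Pi g +
     ((2 * (1 + ep^-1) * Cg ^+ 2)%:E * Vfunc mu Pi h +
     (2 * (1 + ep^-1) * (Cg ^+ 2 / eta))%:E * Lfunc mu Pi h))%E.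
Proof.
move=> m1 m2 mg mh ep0 eta0 gC HB.
have Cg0 : 0 <= Cg by case/andP: (gC (point : E)) => /le_trans; apply.
have a0 : 0 <= 1 + ep^-1 by rewrite addr_ge0 // invr_ge0 ltW.
have c1 : 0 <= 1 + ep by lra.
have c2 : 0 <= 2 * (1 + ep^-1) * eta ^+ 2 by apply: mulr_ge0; [apply: mulr_ge0 | apply: sqr_ge0].
have c3 : 0 <= 2 * (1 + ep^-1) * Cg ^+ 2 by apply: mulr_ge0; [apply: mulr_ge0 | apply: sqr_ge0].
have c4 : 0 <= 2 * (1 + ep^-1) * (Cg ^+ 2 / eta).
  by apply: mulr_ge0; [apply: mulr_ge0 | apply: divr_ge0; [apply: sqr_ge0|apply: ltW]].
have p2 f : forall x y, 0 <= (f x - f y) ^+ 2 * w Pi x y.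
  by move=> x y; rewrite mulr_ge0 ?sqr_ge0 ?w_ge0.
have pq : forall x y, 0 <= `|h x - 1| ^+ 3 * w Pi x y.
  by move=> x y; rewrite mulr_ge0 ?exprn_ge0 ?w_ge0.
have e1 := II_comb2 smu c1 c2 (mPf2 m2) (mPf2 mg) (p2 f2) (p2 g).
have e2 := II_comb2 smu c3 c4 (mPf2 mh) (mPq mh) (p2 h) pq.
rewrite -(LII mh).
have -> : Vfunc mu Pi f2 = II mu (fun x y => (f2 x - f2 y) ^+ 2 * w Pi x y) by [].
have -> : Vfunc mu Pi g = II mu (fun x y => (g x - g y) ^+ 2 * w Pi x y) by [].
have -> : Vfunc mu Pi h = II mu (fun x y => (h x - h y) ^+ 2 * w Pi x y) by [].
rewrite -e1 -e2.
have mR1 := mP_add (mP_mul (mP_cst (1 + ep)) (mPf2 m2))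
   (mP_mul (mP_cst (2 * (1 + ep^-1) * eta ^+ 2)) (mPf2 mg)).
have mR2 := mP_add (mP_mul (mP_cst (2 * (1 + ep^-1) * Cg ^+ 2)) (mPf2 mh))
   (mP_mul (mP_cst (2 * (1 + ep^-1) * (Cg ^+ 2 / eta))) (mPq mh)).
have pR1 : forall x y, 0 <= (1 + ep) * ((f2 x - f2 y) ^+ 2 * w Pi x y) +
    2 * (1 + ep^-1) * eta ^+ 2 * ((g x - g y) ^+ 2 * w Pi x y).
  by move=> x y; apply: addr_ge0; apply: mulr_ge0.
have pR2 : forall x y, 0 <= 2 * (1 + ep^-1) * Cg ^+ 2 * ((h x - h y) ^+ 2 * w Pi x y) +
    2 * (1 + ep^-1) * (Cg ^+ 2 / eta) * (`|h x - 1| ^+ 3 * w Pi x y).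
  by move=> x y; apply: addr_ge0; apply: mulr_ge0.
rewrite -(II_add mR1 mR2 pR1 pR2).
have -> : Vfunc mu Pi f1 = II mu (fun x y => (f1 x - f1 y) ^+ 2 * w Pi x y) by [].
apply: (II_le smu (mPf2 m1) (mP_add mR1 mR2) (p2 f1)).
move=> x y.
have w0 := w_ge0 Pi x y.
set D1 := f1 x - f1 y; set D2 := f2 x - f2 y; set Dg := g x - g y.
set dh := h x - h y; set q := h x - 1.
have k1 := @sq_split R D2 (D1 - D2) ep ep0.
rewrite (_ : D2 + (D1 - D2) = D1) in k1; last by ring.
have hB : (D1 - D2) ^+ 2 = (g y * dh + q * Dg) ^+ 2 by exact: HB.
have k2 : (g y * dh + q * Dg) ^+ 2 <= 2 * (g y * dh) ^+ 2 + 2 * (q * Dg) ^+ 2.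
  have := sqr_ge0 (g y * dh - q * Dg).
  have e : (g y * dh - q * Dg) ^+ 2 = 2 * (g y * dh) ^+ 2 + 2 * (q * Dg) ^+ 2 - (g y * dh + q * Dg) ^+ 2 by ring.
  by rewrite e subr_ge0.
have gy := gC y; have gx := gC x.
have k3 : (g y * dh) ^+ 2 <= Cg ^+ 2 * dh ^+ 2.
  rewrite exprMn ler_wpM2r ?sqr_ge0 //.
  case/andP: gy => gy0 gyC.
  by rewrite lerXn2r // ?nnegrE // (le_trans gy0).
have DgC : `|Dg| <= Cg.
  case/andP: gy => gy0 gyC; case/andP: gx => gx0 gxC.
  rewrite ler_norml /Dg; apply/andP; split; lra.
have k4 := @tail_split R q Dg Cg eta eta0 DgC.
set S := 2 * (Cg ^+ 2 * dh ^+ 2) + 2 * (eta ^+ 2 * Dg ^+ 2 + Cg ^+ 2 / eta * `|q| ^+ 3).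
have k5 : (D1 - D2) ^+ 2 <= S.
  rewrite hB /S; rewrite [(q * Dg) ^+ 2]exprMn in k2.
  move: k2 k3 k4; set A := (g y * dh) ^+ 2; set Bq := q ^+ 2 * Dg ^+ 2; lra.
have k6 := ler_wpM2l a0 k5.
have k7 : D1 ^+ 2 <= (1 + ep) * D2 ^+ 2 + (1 + ep^-1) * S.
  by apply: (le_trans k1); rewrite lerD2l.
apply: (le_trans (ler_wpM2r w0 k7)).
by rewrite /S le_eqVlt; apply/orP; left; apply/eqP; ring.
Qed.


End Main3.

Lemma comb_le (R : realType) (a b : R) (L V : \bar R) : 0 <= a -> 0 <= b ->
  (0 <= L)%E -> (0 <= V)%E -> (a%:E * V + b%:E * L <= (a + b)%:E * (L + V))%E.
Proof.
move=> a0 b0 L0 V0; rewrite ge0_muleDr // [X in (X <= _)%E]addeC.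
by apply: leeD; apply: lee_wpmul2r => //; rewrite lee_fin; lra.
Qed.

Lemma Lfunc_ge0 (R : realType) (E : completePseudoMetricType R)
    (mu : {measure set (Borel E) -> \bar R}) (Pi : E -> E -> R[i]) f :
  loc_trace_proj_kernel mu Pi -> (0 <= Lfunc mu Pi f)%E.
Proof.
move=> hPi; apply: integral_ge0 => x _; rewrite lee_fin mulr_ge0 ?exprn_ge0 //.
exact: (K_ge0 hPi).
Qed.

Lemma Vfunc_ge0 (R : realType) (E : completePseudoMetricType R)
    (mu : {measure set (Borel E) -> \bar R}) (Pi : E -> E -> R[i]) f :
  (0 <= Vfunc mu Pi f)%E.
Proof.
apply: integral_ge0 => x _; apply: integral_ge0 => y _.
by rewrite lee_fin mulr_ge0 ?sqr_ge0 // (w_ge0 Pi x y).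
Qed.

Theorem lemma7p7 (R : realType) (E : completePseudoMetricType R)
    (mu : {measure set (Borel E) -> \bar R}) (Pi : E -> E -> R[i])
    (g_ : nat -> E -> R) (g : E -> R) :
  lcs_metric_space E ->
  sigma_finite [set: Borel E] mu ->
  loc_trace_proj_kernel mu Pi ->
  (forall n, A3class mu Pi (g_ n)) ->
  A3class mu Pi g ->
  (exists C : R, forall n x, `|g_ n x| <= C) ->
  ((fun n => Lfunc mu Pi (fun x => g_ n x / g x)) @ \oo --> 0%E) ->
  ((fun n => Vfunc mu Pi (fun x => g_ n x / g x)) @ \oo --> 0%E) ->
  ((fun n => Lfunc mu Pi (g_ n)) @ \oo --> Lfunc mu Pi g) /\
  ((fun n => Vfunc mu Pi (g_ n)) @ \oo --> Vfunc mu Pi g).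
Proof.
move=> _ smu hPi hgn hg _ hL hV.
have Lge0 f : (0 <= Lfunc mu Pi f)%E by apply: Lfunc_ge0; exact: hPi.
case: hg => mg [[c [c0 hc]] [Cg hCg]] Lgfin Vgfin _.
have gpos x : 0 < g x by exact: lt_le_trans c0 (hc x).
have gC x : 0 <= g x <= Cg by rewrite (ltW (gpos x)) hCg.
have Cg0 : 0 <= Cg by exact: le_trans (ltW (gpos (point : E))) (hCg _).
have mgn n : mE (g_ n) by case: (hgn n).
pose phi (t : R) := (Num.max t c)^-1.
have mphi : measurable_fun [set: R] phi.
  apply: nonincreasing_measurable => // s t st.
  have hs : c <= Num.max s c by rewrite le_max lexx orbT.
  have ht : c <= Num.max t c by rewrite le_max lexx orbT.
  have hst : Num.max s c <= Num.max t c.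
    by rewrite ge_max !le_max st lexx !orbT.
  rewrite /phi lef_pV2 ?posrE //; exact: lt_le_trans c0 _.
have mh n : mE (fun x => g_ n x / g x).
  have -> : (fun x => g_ n x / g x) = (fun x => g_ n x * phi (g x)).
    apply/funext => x; rewrite /phi; congr (_ * _ ^-1).
    by apply/esym/max_idPl; exact: hc.
  apply: mE_mul => //; exact: measurableT_comp mphi mg.
have ghn n x : g_ n x = g x * (g_ n x / g x).
  by rewrite mulrC divfK // gt_eqF.
have cond1 n x : `|g_ n x - g x| <= Cg * `|g_ n x / g x - 1|.
  have -> : g_ n x - g x = g x * (g_ n x / g x - 1) by rewrite mulrBr mulr1 -ghn.
  rewrite normrM ger0_norm ?(ltW (gpos x)) //.
  by rewrite ler_wpM2r // hCg.
have cond2 n x : `|g x - g_ n x| <= Cg * `|g_ n x / g x - 1|.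
  by rewrite distrC; exact: cond1.
have HB1 n x y : ((g_ n x - g_ n y) - (g x - g y)) ^+ 2 =
    (g y * ((g_ n x / g x) - (g_ n y / g y)) + ((g_ n x / g x) - 1) * (g x - g y)) ^+ 2.
  by rewrite {1}(ghn n x) {1}(ghn n y); congr (_ ^+ 2); ring.
have HB2 n x y : ((g x - g y) - (g_ n x - g_ n y)) ^+ 2 =
    (g y * ((g_ n x / g x) - (g_ n y / g y)) + ((g_ n x / g x) - 1) * (g x - g y)) ^+ 2.
  by rewrite -HB1 -sqrrN opprB.
pose e n := (Lfunc mu Pi (fun x => (g_ n x / g x)%R) + Vfunc mu Pi (fun x => (g_ n x / g x)%R))%E.
have e0 n : (0 <= e n)%E by rewrite /e; apply: adde_ge0; [apply: Lfunc_ge0; exact: hPi|exact: Vfunc_ge0].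
have ce : e @ \oo --> 0%E.
  by have := cvgeD _ hL hV; rewrite adde0; apply.
split.
- have yL : Lfunc mu Pi g = (fine (Lfunc mu Pi g))%:E.
    by rewrite fineK // ge0_fin_numE ?Lge0.
  have yl0 : 0 <= fine (Lfunc mu Pi g) by rewrite fine_ge0 // Lge0.
  set yl := fine (Lfunc mu Pi g) in yL yl0 *.
  rewrite yL; apply: (@abstract_cvg R _ e) => //.
  move=> ep ep0 ep1; exists ((14 / ep) ^+ 3 * Cg ^+ 3).
  have M0 : 0 <= (14 / ep) ^+ 3 * Cg ^+ 3.
    by rewrite mulr_ge0 // exprn_ge0 // divr_ge0 // ltW.
  split => // n; split.
  + have := L_bound hPi (mgn n) mg (mh n) Cg0 ep0 ep1 (cond1 n).
    rewrite yL => /le_trans; apply; rewrite EFinM.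
    apply: leeD => //; apply: lee_wpmul2l; rewrite ?lee_fin //.
    by apply: leeDl; exact: Vfunc_ge0.
  + have := L_bound hPi mg (mgn n) (mh n) Cg0 ep0 ep1 (cond2 n).
    rewrite yL => /le_trans; apply.
    apply: leeD.
      by apply: leeDl; rewrite lee_fin mulr_ge0 // ltW.
    apply: lee_wpmul2l; rewrite ?lee_fin //.
    by apply: leeDl; exact: Vfunc_ge0.
- have yV : Vfunc mu Pi g = (fine (Vfunc mu Pi g))%:E.
    by rewrite fineK // ge0_fin_numE ?Vfunc_ge0.
  have yv0 : 0 <= fine (Vfunc mu Pi g) by rewrite fine_ge0 // Vfunc_ge0.
  set yv := fine (Vfunc mu Pi g) in yV yv0 *.
  rewrite yV; apply: (@abstract_cvg R _ e) => //.
    by move=> n; exact: Vfunc_ge0.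
  move=> ep ep0 ep1.
  have e20 : 0 < ep / 2 by rewrite divr_gt0.
  have eta0 : 0 < ep / 8 by rewrite divr_gt0.
  have a0 : 0 <= 1 + (ep / 2)^-1 by rewrite addr_ge0 // invr_ge0 ltW.
  have c2E : 2 * (1 + (ep / 2)^-1) * (ep / 8) ^+ 2 <= ep / 2.
    have -> : 2 * (1 + (ep / 2)^-1) * (ep / 8) ^+ 2 = (ep ^+ 2 + 2 * ep) / 32.
      by field; rewrite lt0r_neq0.
    rewrite ler_pdivrMr //; nra.
  have c30 : 0 <= 2 * (1 + (ep / 2)^-1) * Cg ^+ 2.
    by apply: mulr_ge0; [apply: mulr_ge0|apply: sqr_ge0].
  have c40 : 0 <= 2 * (1 + (ep / 2)^-1) * (Cg ^+ 2 / (ep / 8)).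
    by apply: mulr_ge0; [apply: mulr_ge0|apply: divr_ge0; [apply: sqr_ge0|apply: ltW]].
  exists (2 * (1 + (ep / 2)^-1) * Cg ^+ 2 + 2 * (1 + (ep / 2)^-1) * (Cg ^+ 2 / (ep / 8))).
  split; first exact: addr_ge0.
  move=> n; split.
  + have := V_bound smu hPi (h := fun x => g_ n x / g x) (mgn n) mg mg (mh n) e20 eta0 gC (HB1 n).
    rewrite yV => /le_trans; apply; rewrite /e.
    apply: leeD; last by (apply: comb_le => //; try exact: Lge0); exact: Vfunc_ge0.
    rewrite -!EFinM -EFinD lee_fin; nra.
  + have := V_bound smu hPi (h := fun x => g_ n x / g x) mg (mgn n) mg (mh n) e20 eta0 gC (HB2 n).
    rewrite yV => /le_trans; apply; rewrite /e.
    apply: leeD; last by (apply: comb_le => //; try exact: Lge0); exact: Vfunc_ge0.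
    apply: leeD.
      by apply: lee_wpmul2r; [exact: Vfunc_ge0|rewrite lee_fin; lra].
    by rewrite -EFinM lee_fin; nra.
Qed.
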